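(* Fix a positive integer $k$ and a real number $\epsilon > 0$. Then all but finitely many numerical semigroups $\Lambda$ with $e(\Lambda) = k$ satisfy $c(\Lambda) > 0$ and \[ \frac{c'(\Lambda)}{c(\Lambda)} > \frac{1}{k} - \epsilon. \]
   Context: A numerical semigroup is a subset $\Lambda \subseteq \mathbb{Z}_{\ge 0}$ that contains $0$, is closed under addition, and has finite complement in $\mathbb{Z}_{\ge 0}$. Every numerical semigroup has a unique minimal (with respect to inclusion) generating set, which is finite; its size is the embedding dimension $e(\Lambda)$. The conductor is $c(\Lambda) = \max(\mathbb{Z}_{\ge 0}\setminus\Lambda) + 1$ (with $c(\Lambda)=0$ if $\Lambda = \mathbb{Z}_{\ge 0}$). Define $c'(\Lambda) = |\{\lambda \in \Lambda : \lambda < c(\Lambda)\}|$. *)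

(* Defs.v *)
From mathcomp Require Import all_boot.
Set Implicit Arguments. Unset Strict Implicit. Unset Printing Implicit Defensive.

Definition numerical_semigroup (S : nat -> bool) : Prop :=
  S 0 /\ (forall a b, S a -> S b -> S (a + b)) /\
  (exists N, forall n, N <= n -> S n).

Definition in_span (G : seq nat) (n : nat) : Prop :=
  exists c : seq nat, size c = size G /\
    n = \sum_(i < size G) nth 0 c i * nth 0 G i.

Definition generates (G : seq nat) (S : nat -> bool) : Prop :=
  forall n, S n <-> in_span G n.

Definition minimal_generating_set (G : seq nat) (S : nat -> bool) : Prop :=
  uniq G /\ generates G S /\
  (forall G' : seq nat, {subset G' <= G} -> generates G' S -> {subset G <= G'}).

Definition embedding_dimension_is (S : nat -> bool) (k : nat) : Prop :=
  exists G : seq nat, minimal_generating_set G S /\ size G = k.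

(* c is the conductor of S: max(N \ S) + 1, or 0 if S = N. *)
Definition is_conductor (S : nat -> bool) (c : nat) : Prop :=
  (forall m, c <= m -> S m) /\ (0 < c -> ~~ S c.-1).

Definition cprime (S : nat -> bool) (c : nat) : nat := count S (iota 0 c).

(* Main.v *)
Require Import Defs.
From mathcomp Require Import all_boot.
From mathcomp Require Import zify.
From Stdlib Require Import Reals.
From Stdlib Require Import IndefiniteDescription.
From Stdlib Require Import Lra Psatz ZArith.

Lemma pairs_size (s : seq nat) (a : nat -> nat) (j0 : nat) :
  size [seq (r, j) | r <- s, j <- iota j0 (a r)] = \sum_(r <- s) a r.
Proof.
rewrite size_allpairs_dep sumnE big_map.
by apply: eq_bigr => r _; rewrite size_iota.
Qed.

Lemma pairs_uniq (s : seq nat) (a : nat -> nat) (j0 : nat) :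
  uniq s -> uniq [seq (r, j) | r <- s, j <- iota j0 (a r)].
Proof.
move=> us; apply: allpairs_uniq_dep => //; first by move=> r _; apply: iota_uniq.
by move=> [r1 j1] [r2 j2] _ _ /= [-> ->].
Qed.

Lemma count_le (m : nat) (a b : nat -> nat) (f : nat * nat -> nat * nat) :
  (forall r j, r < m -> 0 < j <= a r ->
     (f (r,j)).1 < m /\ 0 < (f (r,j)).2 <= b (f (r,j)).1) ->
  (forall r1 j1 r2 j2, r1 < m -> 0 < j1 <= a r1 -> r2 < m -> 0 < j2 <= a r2 ->
     f (r1,j1) = f (r2,j2) -> r1 = r2 /\ j1 = j2) ->
  \sum_(r < m) a r <= \sum_(r < m) b r.
Proof.
move=> himg hinj.
rewrite -!(big_mkord xpredT) /index_iota subn0 -(pairs_size _ _ 1) -(pairs_size _ b 1).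
rewrite -(size_map f); apply: uniq_leq_size.
  rewrite map_inj_in_uniq; first by apply: pairs_uniq; apply: iota_uniq.
  move=> p q /allpairsPdep [r1 [j1 [h1 h1' ->]]] /allpairsPdep [r2 [j2 [h2 h2' ->]]] e.
  move: h1 h1' h2 h2'; rewrite !mem_iota /= !add0n !add1n => h1 h1' h2 h2'.
  by have [-> ->] := hinj r1 j1 r2 j2 h1 h1' h2 h2' e.
move=> z /mapP [p /allpairsPdep [r [j [hr hj ->]]] ->].
move: hr hj; rewrite !mem_iota /= add0n add1n => hr hj.
have [h1 h2] := himg r j hr hj.
apply/allpairsPdep; exists (f (r, j)).1, (f (r, j)).2; split.
- by rewrite mem_iota.
- by rewrite mem_iota add1n.
- by case: (f (r,j)).
Qed.

Fixpoint allbl (n : nat) : list (list bool) :=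
  match n with
  | 0 => [:: [::]]
  | n'.+1 => (List.map (cons true) (allbl n') ++ List.map (cons false) (allbl n'))%list
  end.

Lemma allbl_in (l : list bool) : List.In l (allbl (size l)).
Proof.
elim: l => [|b l IH] /=; first by left.
apply: List.in_or_app; case: b; [left|right]; exact: List.in_map.
Qed.
Lemma main_nat (S : nat -> bool) (G : seq nat) (c : nat) :
  numerical_semigroup S -> generates G S -> 0 < size G ->
  (forall n, c <= n -> S n) ->
  exists m, 0 < m /\ m <= expn ((c + m) %/ m).+1 (size G) /\
            c <= size G * count S (iota 0 c) + 2 * size G * m.
Proof.
move=> [S0 [Sadd [N SN]]] gen kpos Sc.
set k := size G.
have span : forall x : seq nat, S (\sum_(i < k) nth 0 x i * nth 0 G i).
  move=> x; apply/gen; exists (mkseq (nth 0 x) k); split; first by rewrite size_mkseq.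
  by apply: eq_bigr => i _; rewrite nth_mkseq.
have hpos : exists n, (0 < n) && (n \in G).
  case: (boolP (has (fun n => 0 < n) G)) => [/hasP [n nG np]|hn].
    by exists n; rewrite np nG.
  exfalso; have /gen [x [_ ex]] := SN N.+1 (leqnSn N).
  move: ex; rewrite big1 // => i _.
  have : nth 0 G i \in G by apply: mem_nth.
  move/(hasPn hn); rewrite lt0n negbK => /eqP ->; by rewrite muln0.
pose m := ex_minn hpos.
have [mpos mG mmin] : [/\ 0 < m, m \in G & forall n, 0 < n -> n \in G -> m <= n].
  rewrite /m; case: ex_minnP => n /andP [np nG] nmin; split => // n' h1 h2.
  by apply: nmin; rewrite h1 h2.
clearbody m.
have i0lt : index m G < k by rewrite index_mem.
pose i0 : 'I_k := Ordinal i0lt.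
have gi0 : nth 0 G i0 = m by rewrite /= nth_index.
have genmul : forall (i : 'I_k) j, S (j * nth 0 G i).
  move=> i j; have := span (mkseq (fun l => if l == i then j else 0) k).
  rewrite (bigD1 i) //= big1 ?addn0 ?nth_mkseq ?eqxx //.
  move=> l /negbTE hl; rewrite nth_mkseq //.
  by have -> : (nat_of_ord l == nat_of_ord i) = false by exact: hl.
have hex : forall r, exists n, S n && (n %% m == r %% m).
  move=> r; exists (N * m + r %% m); rewrite modnMDl modn_mod eqxx andbT.
  apply: SN; apply: leq_trans (leq_addr _ _); by rewrite leq_pmulr.
pose w r := ex_minn (hex r).
have wP : forall r, [/\ S (w r), w r %% m = r %% m &
                      forall n, S n -> n %% m = r %% m -> w r <= n].
  move=> r; rewrite /w; case: ex_minnP => n /andP [Sn /eqP nm] nmin; split => //.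
  by move=> n' h1 h2; apply: nmin; rewrite h1 h2 eqxx.
clearbody w.
have wS r : S (w r) by case: (wP r).
have wmod r : w r %% m = r %% m by case: (wP r).
have wmin r n : S n -> n %% m = r %% m -> w r <= n by case: (wP r) => _ _; apply.
have wlt r : w r < c + m.
  rewrite ltnNge; apply/negP => h.
  have hm : m <= w r by apply: leq_trans h; apply: leq_addl.
  have : w r <= w r - m.
    apply: wmin; first by apply: Sc; rewrite leq_subRL // addnC.
    by rewrite -(wmod r) -{2}(subnK hm) modnDr.
  by rewrite leqNgt ltn_subrL mpos /= (leq_trans mpos hm).
have hx : forall r, exists x : seq nat, size x = k /\ w r = \sum_(i < k) nth 0 x i * nth 0 G i.
  by move=> r; apply/gen.
pose x r := proj1_sig (constructive_indefinite_description _ (hx r)).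
have xP r : size (x r) = k /\ w r = \sum_(i < k) nth 0 (x r) i * nth 0 G i.
  exact: (proj2_sig (constructive_indefinite_description _ (hx r))).
clearbody x.
have chain : forall r (i : 'I_k) j, j <= nth 0 (x r) i ->
   j * nth 0 G i <= w r /\ w ((w r - j * nth 0 G i) %% m) = w r - j * nth 0 G i.
  move=> r i j hj.
  case: (xP r) => sx ex.
  pose y := mkseq (fun l => if l == i then nth 0 (x r) l - j else nth 0 (x r) l) k.
  set v := \sum_(l < k) nth 0 y l * nth 0 G l.
  have dec : w r = v + j * nth 0 G i.
    rewrite ex /v (bigD1 i) //= [in RHS](bigD1 i) //= nth_mkseq // eqxx.
    rewrite [RHS]addnAC -mulnDl subnK //; congr (_ + _).
    apply: eq_bigr => l hl; rewrite nth_mkseq //.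
    by have -> : (nat_of_ord l == nat_of_ord i) = false by exact: negbTE hl.
  have Sv : S v by apply: span.
  have vle : j * nth 0 G i <= w r by rewrite dec leq_addl.
  have vE : w r - j * nth 0 G i = v by rewrite dec addnK.
  split=> //; rewrite vE.
  apply/eqP; rewrite eqn_leq; apply/andP; split.
    by apply: wmin => //; rewrite modn_mod.
  rewrite leqNgt; apply/negP => hlt.
  set s := w (v %% m) in hlt.
  have Ss : S (s + j * nth 0 G i) by apply: Sadd; [apply: wS | apply: genmul].
  have : w r <= s + j * nth 0 G i.
    apply: wmin Ss _; rewrite -(wmod r) dec.
    by rewrite -modnDml (wmod (v %% m)) modn_mod modnDml.
  by rewrite leqNgt dec ltn_add2r hlt.
have genb : forall i : 'I_k, \sum_(r < m) nth 0 (x r) i * nth 0 G i <= \sum_(r < m) (c + m - w r).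
  move=> i; set g := nth 0 G i.
  case: (posnP g) => [g0 | gpos].
    by rewrite big1 // => r _; rewrite g0 muln0.
  apply: leq_trans (_ : \sum_(r < m) (c + m - w r) %/ g * g <= _); last first.
    by apply: leq_sum => r _; apply: leq_trunc_div.
  rewrite -!big_distrl /= leq_mul2r; apply/orP; right.
  apply: (@count_le m (fun r => nth 0 (x r) i) (fun r => (c + m - w r) %/ g)
            (fun p => ((w p.1 - p.2 * g) %% m, p.2))).
  - move=> r j hr /andP [j0 hj] /=; split; first by rewrite ltn_mod.
    rewrite j0 /=; have [hle hw] := chain r i j hj.
    rewrite leq_divRL // hw leq_subRL; last first.
      exact: leq_trans (leq_subr _ _) (ltnW (wlt r)).
    by rewrite (subnK hle) (ltnW (wlt r)).
  - move=> r1 j1 r2 j2 h1 /andP[_ hj1] h2 /andP[_ hj2] [e1 e2]; subst j2.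
    have [l1 w1] := chain r1 i j1 hj1; have [l2 w2] := chain r2 i j1 hj2.
    have e : w r1 - j1 * g = w r2 - j1 * g by rewrite -w1 -w2 e1.
    have ew : w r1 = w r2 by rewrite -(subnK l1) e subnK.
    split=> //.
    by rewrite -(modn_small h1) -(modn_small h2) -(wmod r1) -(wmod r2) ew.
have xz : forall r : 'I_m, nth 0 (x r) i0 = 0.
  move=> r; apply/eqP; rewrite -leqn0 leqNgt; apply/negP => h.
  have [hle hw] := chain r i0 1 h; rewrite mul1n gi0 in hle hw.
  have e : (w r - m) %% m = r.
    by rewrite -[RHS](modn_small (ltn_ord r)) -(wmod r) -{2}(subnK hle) modnDr.
  rewrite e in hw.
  have : w r - m < w r by rewrite ltn_subrL mpos (leq_trans mpos hle).
  by rewrite -hw ltnn.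
have sumw : \sum_(r < m) w r <= k.-1 * \sum_(r < m) (c + m - w r).
  rewrite (eq_bigr (fun r : 'I_m => \sum_(i < k) nth 0 (x r) i * nth 0 G i)); last first.
    by move=> r _; case: (xP r).
  rewrite exchange_big /= (bigD1 i0) //= big1; last by move=> r _; rewrite xz mul0n.
  rewrite add0n; apply: (@leq_trans (\sum_(i < k | i != i0) \sum_(r < m) (c + m - w r))).
    by apply: leq_sum => i _; apply: genb.
  have hc : #|[set i : 'I_k | i != i0]| = k.-1.
    by rewrite cardsE cardC1 card_ord.
  by rewrite sum_nat_cond_const hc.
have cpb : \sum_(r < m) (c - w r) %/ m <= count S (iota 0 c).
  rewrite -size_filter -(big_mkord xpredT (fun r => (c - w r) %/ m)) /index_iota subn0 -(pairs_size _ _ 0).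
  rewrite -(size_map (fun p => w p.1 + p.2 * m)).
  apply: uniq_leq_size.
    rewrite map_inj_in_uniq; first by apply: pairs_uniq; apply: iota_uniq.
    move=> p q /allpairsPdep [r1 [j1 [h1 h1' ->]]] /allpairsPdep [r2 [j2 [h2 h2' ->]]] /= e.
    rewrite !mem_iota /= in h1 h2.
    have er : r1 = r2.
      have : (w r1 + j1 * m) %% m = (w r2 + j2 * m) %% m by rewrite e.
      by rewrite ![w _ + _]addnC !modnMDl (wmod r1) (wmod r2) !modn_small.
    subst r2; move/addnI: e => /eqP; rewrite eqn_pmul2r // => /eqP ->.
    by [].
  move=> z /mapP [p /allpairsPdep [r [j [hr hj ->]]] ->] /=.
  rewrite mem_filter mem_iota /= add0n.
  have -> : S (w r + j * m) by apply: Sadd; [apply: wS | rewrite -gi0; apply: genmul].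
  rewrite mem_iota add0n in hj.
  have : j.+1 * m <= c - w r by rewrite -leq_divRL.
  rewrite mulSn => h; apply/andP; split => //; lia.
have perr : forall r, c < w r + (c - w r) %/ m * m + m.
  move=> r; have := divn_eq (c - w r) m; have := ltn_pmod (c - w r) mpos; lia.
have sum1 : m * c.+1 <= \sum_(r < m) w r + (\sum_(r < m) (c - w r) %/ m) * m + m * m.
  apply: (@leq_trans (\sum_(r < m) (w r + (c - w r) %/ m * m + m))).
    rewrite -[X in X * _](card_ord m) -sum_nat_const; apply: leq_sum => r _; exact: perr.
  by rewrite !big_split /= big_distrl /= sum_nat_const card_ord.
have sum2 : \sum_(r < m) w r + \sum_(r < m) (c + m - w r) = m * (c + m).
  rewrite -big_split /= (eq_bigr (fun=> c + m)); first by rewrite sum_nat_const card_ord.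
  by move=> r _; rewrite subnKC // (ltnW (wlt r)).
exists m; split => //; split.
  pose B := (c + m) %/ m.
  pose f := fun r : 'I_m => [ffun l : 'I_k =>
     (inord (if nth 0 G l == 0 then 0 else nth 0 (x r) l) : 'I_B.+1)].
  have bnd : forall (r : 'I_m) (l : 'I_k),
      (if nth 0 G l == 0 then 0 else nth 0 (x r) l) < B.+1.
    move=> r l; case: eqP => // /eqP gl; rewrite ltnS leq_divRL //.
    have h2 : nth 0 (x r) l * nth 0 G l <= w r.
      by rewrite (proj2 (xP r)) (bigD1 l) //= leq_addr.
    have h1 : m <= nth 0 G l by apply: mmin; [rewrite lt0n | apply: mem_nth].
    apply: leq_trans (ltnW (wlt r)); apply: leq_trans h2.
    by rewrite leq_mul2l h1 orbT.
  have finj : injective f.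
    move=> r1 r2 /ffunP e; apply: ord_inj.
    have ew : w r1 = w r2.
      rewrite (proj2 (xP r1)) (proj2 (xP r2)); apply: eq_bigr => l _.
      have := e l; rewrite !ffunE => /(congr1 val); rewrite /= !inordK ?bnd //.
      by case: eqP => [->|_ ->]; rewrite ?muln0.
    by rewrite -(modn_small (ltn_ord r1)) -(modn_small (ltn_ord r2)) -(wmod r1) -(wmod r2) ew.
  by have := leq_card f finj; rewrite card_ffun !card_ord.
set A := \sum_(r < m) w r in sumw sum1 sum2.
set T := \sum_(r < m) (c + m - w r) in sumw sum2.
set J := \sum_(r < m) (c - w r) %/ m in cpb sum1.
set cp := count S (iota 0 c) in cpb *.
clearbody A T J cp.
have kE : k = k.-1.+1 by rewrite prednK.
move: kE sumw sum1 sum2 cpb; generalize k.-1 => kk kE sumw sum1 sum2 cpb.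
rewrite kE.
have h1 : kk.+1 * A <= kk * (m * (c + m)) by rewrite -sum2; nia.
have h2 : m * (kk.+1 * c.+1) <= m * (kk * (c + m) + kk.+1 * cp + kk.+1 * m) by nia.
rewrite leq_pmul2l // in h2; nia.
Qed.


Theorem theorem2 (k : nat) (hk : 0 < k) (eps : R) (heps : (0 < eps)%R) :
  exists exceptions : list (nat -> bool),
    forall S : nat -> bool,
      numerical_semigroup S ->
      embedding_dimension_is S k ->
      ~ (exists T, List.In T exceptions /\ S =1 T) ->
      forall c : nat, is_conductor S c ->
        0 < c /\
        (INR (cprime S c) / INR c > 1 / INR k - eps)%R.
Proof.
have [L hL] : exists L : nat, (2 / eps < INR L)%R.
  have h2 : (0 < 2 / eps)%R by apply: Rdiv_lt_0_compat; lra.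
  have [hup _] := archimed (2 / eps).
  have hz : (0 <= up (2 / eps))%Z.
    apply: Z.lt_le_incl; apply: lt_0_IZR; lra.
  exists (Z.to_nat (up (2 / eps))); rewrite INR_IZR_INZ Z2Nat.id //.
pose C0 := L * expn L.+1 k.
pose T (bs : list bool) := fun n => if n < C0 then nth false bs n else true.
exists (List.map T (allbl C0)).
move=> S hS [G [[_ [gen _]] sz]] hnot c [Sc _].
have cgt : C0 < c.
  rewrite ltnNge; apply/negP => hc; apply: hnot.
  exists (T (mkseq S C0)); split.
    apply: List.in_map; have := allbl_in (mkseq S C0); by rewrite size_mkseq.
  move=> n; rewrite /T; case: ltnP => hn; first by rewrite nth_mkseq.
  apply: Sc; exact: leq_trans hc hn.
have kG : 0 < size G by rewrite sz.
have [m [mpos [mB hcc]]] := @main_nat S G c hS gen kG Sc.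
rewrite sz in mB hcc.
have Lm : L * m <= c.
  rewrite leqNgt; apply/negP => hlt.
  have hq : (c + m) %/ m <= L.
    rewrite divnDr ?dvdnn // divnn mpos addn1.
    by rewrite ltn_divLR.
  have hE : m <= expn L.+1 k by apply: leq_trans mB _; rewrite leq_exp2r // ltnS.
  have : L * m <= C0 by rewrite /C0 leq_mul2l hE orbT.
  move: cgt hlt; rewrite /C0; lia.
have key : L * c <= L * k * cprime S c + 2 * k * c.
  have h1 := leq_mul (leqnn L) hcc.
  have h2 := leq_mul (leqnn (2 * k)) Lm.
  rewrite /cprime; nia.
split; first by apply: leq_ltn_trans cgt.
have cpos : (0 < INR c)%R by apply: lt_0_INR; apply/ltP; apply: leq_ltn_trans cgt.
have kpos : (0 < INR k)%R by apply: lt_0_INR; apply/ltP.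
have Lpos : (0 < INR L)%R.
  apply: Rlt_trans hL; apply: Rdiv_lt_0_compat; lra.
move: key; rewrite -!multE -!plusE => /leP /le_INR; rewrite !plus_INR !mult_INR => key.
rewrite ?mult_INR in key.
replace (INR 2) with 2%R in key by (simpl; lra).
move: key.
set Cr := INR c in cpos *; set K := INR k in kpos *; set Lr := INR L in Lpos hL *; set P := INR (cprime S c).
move=> key.
have hq : P = (P / Cr * Cr)%R by field; try exact: Rgt_not_eq cpos.
set q := (P / Cr)%R in hq *.
rewrite hq in key.
have k1 : (Lr <= Lr * K * q + 2 * K)%R.
  apply: (Rmult_le_reg_r Cr) => //; nra.
have e1 : (2 < eps * Lr)%R.
  have := Rmult_lt_compat_r eps _ _ heps hL.
  have -> : (2 / eps * eps = 2)%R by field; try exact: Rgt_not_eq heps.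
  move=> h; lra.
have ppos : (0 < 1 / K)%R by apply: Rdiv_lt_0_compat; lra.
have k2 : (Lr * (1 / K) <= Lr * q + 2)%R.
  have := Rmult_le_compat_r (1 / K) _ _ (Rlt_le _ _ ppos) k1.
  replace ((Lr * K * q + 2 * K) * (1 / K))%R with (Lr * q + 2)%R; first by [].
  field; exact: Rgt_not_eq kpos.
have k3 : ((1 / K - q - eps) * Lr < 0)%R by nra.
have k4 : (1 / K - q - eps < 0)%R.
  apply: (Rmult_lt_reg_r Lr) => //; lra.
apply: Rlt_gt; lra.
Qed.
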